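(* Let $M=\begin{pmatrix}a&b\\c&d\end{pmatrix}$ and $M'=\begin{pmatrix}a'&b'\\c'&d'\end{pmatrix}$ be in $\mathrm{Mat}(2,\mathbb{Z})$ with $\det(M)=\det(M')$, $\mathrm{trace}(M)=\mathrm{trace}(M')$ and $\mathrm{mgcd}(M)=\mathrm{mgcd}(M')=r\in\mathbb{N}$. Then $r$ divides $d-d'$.
   Context: $\mathrm{mgcd}(M)=\gcd(b,c,d-a)\ge0$. *)

(* Defs.v *)
From mathcomp Require Import all_boot all_order all_algebra.
Set Implicit Arguments. Unset Strict Implicit. Unset Printing Implicit Defensive.
Import Order.TTheory GRing.Theory Num.Theory.
Local Open Scope ring_scope.

Definition ma (M : 'M[int]_2) : int := M 0 0.
Definition mb (M : 'M[int]_2) : int := M 0 1.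
Definition mc (M : 'M[int]_2) : int := M 1 0.
Definition md (M : 'M[int]_2) : int := M 1 1.

Definition mgcd (M : 'M[int]_2) : int :=
  gcdz (gcdz (mb M) (mc M)) (md M - ma M).

(* Main.v *)
Require Import Defs.
From mathcomp Require Import all_boot all_order all_algebra.
From mathcomp Require Import ring.
Import GRing.Theory Num.Theory.
Local Open Scope ring_scope.

Lemma key (r : nat) : forall e x : int,
  (r%:Z %| x)%Z -> (r%:Z ^+ 2 %| e * (e + x))%Z -> (r%:Z %| e)%Z.
Proof.
elim: r {-2}r (leqnn r) => [|n IH] r Hr e x.
  move: Hr; rewrite leqn0 => /eqP -> /= Hx H.
  move: Hx; rewrite dvd0z => /eqP Hx; move: H; rewrite Hx addr0 expr0n /= dvd0z.
  by rewrite mulf_eq0 orbb dvd0z.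
have [r1|r_gt1] := leqP r 1.
  case: r r1 {Hr} => [|[|//]] _; last by rewrite dvd1z.
  move=> Hx H; move: Hx; rewrite dvd0z => /eqP Hx; move: H; rewrite Hx addr0 expr0n /= dvd0z.
  by rewrite mulf_eq0 orbb dvd0z.
move=> Hx H.
set p := pdiv r.
have pp : prime p by apply: pdiv_prime.
have pr : (p %| r)%N by apply: pdiv_dvd.
have pr' : (p%:Z %| r%:Z)%Z by rewrite dvdzE.
have px : (p%:Z %| x)%Z by apply: (dvdz_trans pr' Hx).
have pee : (p%:Z %| e * e)%Z.
  have h1 : (p%:Z %| e * (e + x))%Z.
    apply: (dvdz_trans _ H); rewrite expr2; exact: dvdz_mulr.
  have h2 : (p%:Z %| e * x)%Z by apply: dvdz_mull.
  have -> : e * e = e * (e + x) - e * x by ring.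
  by rewrite rpredB.
have pe : (p%:Z %| e)%Z.
  move: pee; rewrite !dvdzE /= abszM.
  by rewrite Euclid_dvdM // orbb.
case/dvdzP: pe => e1 De; case/dvdzP: px => x1 Dx.
case/dvdnP: pr => r1 Dr.
have p0 : p%:Z != 0 by rewrite eqz_nat -lt0n prime_gt0.
have p2 : p%:Z ^+ 2 != 0 by rewrite expf_neq0.
have Hr1 : (r1 < r)%N.
  rewrite Dr -[X in (X < _)%N]muln1 ltn_mul2l prime_gt1 // andbT lt0n.
  by apply/eqP => r10; move: r_gt1; rewrite Dr r10 mul0n.
have Hr1n : (r1 <= n)%N by rewrite -ltnS; apply: leq_trans Hr1 Hr.
have: (r1%:Z %| e1)%Z.
  apply: (IH r1 Hr1n e1 x1).
    by move: Hx; rewrite Dr Dx PoszM dvdz_mul2r.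
  move: H; rewrite Dr De Dx PoszM.
  have -> : e1 * p%:Z * (e1 * p%:Z + x1 * p%:Z) = e1 * (e1 + x1) * p%:Z ^+ 2 by ring.
  have -> : (r1%:Z * p%:Z) ^+ 2 = r1%:Z ^+ 2 * p%:Z ^+ 2 by ring.
  by rewrite dvdz_mul2r.
by rewrite Dr De PoszM dvdz_mul2r.
Qed.

Lemma det22 (M : 'M[int]_2) : \det M = ma M * md M - mb M * mc M.
Proof.
rewrite (expand_det_row _ 0) !big_ord_recl big_ord0 /cofactor !det_mx11 !mxE /=.
rewrite /ma /md /mb /mc /=.
have e0 : forall i : 'I_2, val i = 0%N -> i = 0 by move=> i h; apply/val_inj.
have e1 : forall i : 'I_2, val i = 1%N -> i = 1 by move=> i h; apply/val_inj.
rewrite (e1 (lift 0 0)) //.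
idtac.
rewrite (e0 (lift 1 0)) //= expr0 expr1; ring.
Qed.

Lemma tr22 (M : 'M[int]_2) : \tr M = ma M + md M.
Proof.
rewrite /mxtrace !big_ord_recl big_ord0 /ma /md addr0.
have e1 : forall i : 'I_2, val i = 1%N -> i = 1 by move=> i h; apply/val_inj.
by rewrite (e1 (lift ord0 ord0)).
Qed.

Lemma divs (M : 'M[int]_2) (r : nat) : mgcd M = r%:Z ->
  [/\ (r%:Z %| mb M)%Z, (r%:Z %| mc M)%Z & (r%:Z %| md M - ma M)%Z].
Proof.
move=> H.
have : (r%:Z %| mgcd M)%Z by rewrite H dvdzz.
by rewrite /mgcd !dvdz_gcd => /andP[/andP[-> ->] ->].
Qed.

Theorem lemma38 (M M' : 'M[int]_2) (r : nat) :
  \det M = \det M' -> \tr M = \tr M' ->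
  mgcd M = r%:Z -> mgcd M' = r%:Z ->
  (r%:Z %| md M - md M')%Z.
Proof.
rewrite !det22 !tr22 => HD HT /divs [hb hc hx] /divs [hb' hc' hx'].
apply: (@key r _ _ hx').
have -> : (md M - md M') * (md M - md M' + (md M' - ma M'))
   = mb M' * mc M' - mb M * mc M.
  have Ha : ma M' = ma M + md M - md M' by rewrite HT; ring.
  move: HD; rewrite Ha => HD.
  have -> : mb M' * mc M' = (ma M + md M - md M') * md M' - (ma M * md M - mb M * mc M)
    by rewrite HD; ring.
  ring.
apply: rpredB; rewrite expr2; exact: dvdz_mul.
Qed.
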